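(* Let $R$ be a ring with unity and involution $*$, let $a\in R$ and let $m$ be a nonnegative integer. Then $a$ is left dual core invertible if and only if $a$ is left dual $a^m$-core invertible.
   Context: Here $a^0=1$. An element $a$ is left dual core invertible if there exists $x\in R$ with $axa=a$, $(xa)^*=xa$ and $x^2a=x$. For $v\in R$, $a$ is left dual $v$-core invertible if there exists $x\in R$ with $axva=a$, $(xva)^*=xva$ and $x^2va=x$. *)

(* Defs.v *)
From mathcomp Require Import all_boot all_algebra.
Set Implicit Arguments. Unset Strict Implicit. Unset Printing Implicit Defensive.
Import GRing.Theory.
Local Open Scope ring_scope.

Definition is_involution (R : pzRingType) (star : R -> R) : Prop :=
  (forall a b : R, star (a + b) = star a + star b) /\
  (forall a b : R, star (a * b) = star b * star a) /\
  (forall a : R, star (star a) = a).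

Definition left_dual_core_invertible (R : pzRingType) (star : R -> R) (a : R) : Prop :=
  exists x : R, a * x * a = a /\ star (x * a) = x * a /\ x ^+ 2 * a = x.

Definition left_dual_v_core_invertible (R : pzRingType) (star : R -> R) (v a : R) : Prop :=
  exists x : R, a * x * v * a = a /\ star (x * v * a) = x * v * a
                /\ x ^+ 2 * v * a = x.

(* Main.v *)
Require Import Defs.
From mathcomp Require Import all_boot all_algebra.
Local Open Scope ring_scope.
Import GRing.Theory.

Lemma powk (R : pzRingType) (x a : R) : x ^+ 2 * a = x ->
  forall k : nat, x ^+ k.+1 * a ^+ k.+1 = x * a.
Proof.
move=> H; elim=> [|k IH]; first by rewrite !expr1.
have -> : x ^+ k.+2 = x ^+ k * x ^+ 2 by rewrite -exprD addn2.
have H2 : x * (x * a) = x by rewrite mulrA -expr2.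
rewrite (exprS a) !mulrA -[x ^+ k * x * x * a]mulrA -[x ^+ k * x * (x * a)]mulrA H2 -exprSr; exact: IH.
Qed.

Theorem corollary3p5 (R : pzRingType) (star : R -> R) (a : R) (m : nat) :
  is_involution star ->
  (left_dual_core_invertible star a <-> left_dual_v_core_invertible star (a ^+ m) a).
Proof.
move=> _; split.
- case=> x [H1 [H2 H3]]; exists (x ^+ m.+1).
  have E : x ^+ m.+1 * (a ^+ m * a) = x * a by rewrite -exprSr powk.
  have H4 : x * (x * a) = x by rewrite mulrA -expr2.
  split; first by rewrite -!mulrA E mulrA H1.
  split; first by rewrite -!mulrA E H2.
  by rewrite expr2 -!mulrA E (exprSr x m) -mulrA H4 -exprSr.
- case=> y [H1 [H2 H3]]; exists (y * a ^+ m).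
  split; first by rewrite mulrA.
  split; first by [].
  case: m H1 H2 H3 => [|m] H1 H2 H3.
    by rewrite expr0 !mulr1 in H3 *.
  have Q : a ^+ m.+1 * (y * (a ^+ m.+1 * a)) = a ^+ m.+1.
    by rewrite {1}exprSr -mulrA (mulrA a y) (mulrA (a * y)) H1 -exprSr.
  by rewrite expr2 -!mulrA Q.
Qed.
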